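(* Let $\rho>0$ and $\mu_{\mathsf f}\in\mathbb R^n$. Consider the minimum variance steering problem: for the system and affine disturbance feedback policy described in the context, find $\overline{\mathscr U}=\{\bar u(0),\dots,\bar u(T-1)\}$ and $\mathscr K=\{K_{(t,\tau)}:0\le\tau\le t\le T-2\}$ minimizing $J_1(\overline{\mathscr U},\mathscr K):=\mathrm{tr}(\mathrm{var}_x(T))$ subject to $\mathbb E\big[\sum_{t=0}^{T-1}u(t)^\top u(t)\big]-\rho^2\le0$ and $\mu_x(T)=\mu_{\mathsf f}$. This problem is equivalent to the convex program $$\min_{(\bar{\bm u},\bm{\mathcal K})\in\mathscr D}\ \mathcal J_1(\bm{\mathcal K})\quad\text{subject to}\quad (\bar{\bm u},\bm{\mathcal K})\in\mathscr D_1\cap\mathscr D_2,$$ where $\mathcal J_1(\bm{\mathcal K}):=\mathrm{tr}\big(\mathbf P_{T+1}\mathfrak h(\bm{\mathcal K})\mathbf P_{T+1}^\top\big)$ with $\mathfrak h(\bm{\mathcal K}):=\mathbf G_0\Sigma_0\mathbf G_0^\top+(\mathbf G_{\bm w}+\mathbf G_{\bm u}\bm{\mathcal K})\mathbf W(\mathbf G_{\bm w}+\mathbf G_{\bm u}\bm{\mathcal K})^\top$, $\mathscr D_1:=\{(\bar{\bm u},\bm{\mathcal K})\in\mathscr D:\ \bar{\bm u}^\top\bar{\bm u}+\mathrm{tr}(\bm{\mathcal K}\mathbf W\bm{\mathcal K}^\top)-\rho^2\le0\}$ and $\mathscr D_2:=\{(\bar{\bm u},\bm{\mathcal K})\in\mathscr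 D:\ \mathbf P_{T+1}(\mathbf G_{\bm u}\bar{\bm u}+\mathbf G_0\mu_0)-\mu_{\mathsf f}=0\}$, the decision variables being related by $\bar{\bm u}=\mathrm{vertcat}(\overline{\mathscr U})$ and $\bm{\mathcal K}$ built from $\mathscr K$ as in the context.
   Context: System: $x(t+1)=A(t)x(t)+B(t)u(t)+w(t)$, $t\in\{0,\dots,T-1\}$, $x(0)=x_0\sim\mathcal N(\mu_0,\Sigma_0)$ with $\Sigma_0$ symmetric positive definite; $w(0),\dots,w(T-1)$ i.i.d. Gaussian with mean $0$ and covariance $W$ (symmetric positive semidefinite), uncorrelated across time, and $\mathbb E[x_0w(t)^\top]=0$. Policy: $u(0)=\bar u(0)$, $u(t)=\bar u(t)+\sum_{\tau=0}^{t-1}K_{(t-1,\tau)}w(\tau)$ for $t\in\{1,\dots,T-1\}$, $K_{(t-1,\tau)}\in\mathbb R^{m\times n}$. Notation: $\Phi(t,\tau):=A(t-1)\cdots A(\tau)$ ($t>\tau$), $\Phi(t,t)=I$. $\bar{\bm u},\bm w$ are vertical concatenations of $\bar u(0..T-1)$, $w(0..T-1)$. $\mathbf W:=\mathrm{bdiag}(W,\dots,W)$ ($T$ blocks). $\mathbf G_0:=[I;\Phi(1,0);\dots;\Phi(T,0)]$; $\mathbf G_{\bm u}$ (block rows $0..T$, block columns $0..T-1$) has $(i,j)$ block $\Phi(i,j+1)B(j)$ if $i\ge j+1$, else $0$; $\mathbf G_{\bm w}$ has $(i,j)$ block $\Phi(i,j+1)$ if $i\ge j+1$, else $0$. $\bm{\mathcal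 K}:=\begin{bmatrix}0&0\\ \mathbf K&0\end{bmatrix}\in\mathbb R^{Tm\times Tn}$ with $\mathbf K$ block lower triangular having $(i,j)$ block $K_{(i,j)}$, $0\le j\le i\le T-2$; then $\bm u=\bar{\bm u}+\bm{\mathcal K}\bm w$. $\mathscr D$ is the set of all pairs $(\bar{\bm u},\bm{\mathcal K})\in\mathbb R^{Tm}\times\mathbb R^{Tm\times Tn}$ with $\bm{\mathcal K}$ of this structure. $\mathbf P_{T+1}\in\mathbb R^{n\times(T+1)n}$ is zero except for an identity in its last block, so $x(T)=\mathbf P_{T+1}[x(0);\dots;x(T)]$. $\mu_x(T)=\mathbb E[x(T)]$, $\mathrm{var}_x(T)$ its covariance matrix. *)

(* Defs.v *)
From HB Require Import structures.
From mathcomp Require Import all_boot all_order all_algebra.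
From mathcomp Require Import all_classical all_reals all_analysis.

Set Implicit Arguments.
Unset Strict Implicit.
Unset Printing Implicit Defensive.

Import Order.TTheory GRing.Theory Num.Theory.
Local Open Scope ring_scope.

Section Defs.
Variable R : realType.

Fixpoint Phi_aux n (A : nat -> 'M[R]_n) (tau k : nat) : 'M[R]_n :=
  match k with
  | 0 => 1%:M
  | k'.+1 => A (tau + k')%N *m Phi_aux A tau k'
  end.

Definition Phi n (A : nat -> 'M[R]_n) (t tau : nat) : 'M[R]_n :=
  Phi_aux A tau (t - tau).

Definition G0 n (T : nat) (A : nat -> 'M[R]_n) :
  'M[R]_(\sum_(i < T.+1) n, n) :=
  \mxcol_(i < T.+1) Phi A i 0.

Definition Gu n m (T : nat) (A : nat -> 'M[R]_n) (B : nat -> 'M[R]_(n, m)) :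
  'M[R]_(\sum_(i < T.+1) n, \sum_(j < T) m) :=
  \mxblock_(i < T.+1, j < T)
     (if (j.+1 <= i)%N then Phi A i j.+1 *m B j else 0 : 'M[R]_(n, m)).

Definition Gw n (T : nat) (A : nat -> 'M[R]_n) :
  'M[R]_(\sum_(i < T.+1) n, \sum_(j < T) n) :=
  \mxblock_(i < T.+1, j < T)
     (if (j.+1 <= i)%N then Phi A i j.+1 else 0 : 'M[R]_(n, n)).

Definition Wbold n (T : nat) (W : 'M[R]_n) : 'M[R]_(\sum_(i < T) n) :=
  \mxdiag_(i < T) W.

Definition PT n (T : nat) : 'M[R]_(n, \sum_(j < T.+1) n) :=
  \mxrow_(j < T.+1) (if j == ord_max then 1%:M else 0 : 'M[R]_(n, n)).

Definition vcat m (T : nat) (Ubar : nat -> 'cV[R]_m) : 'cV[R]_(\sum_(t < T) m) :=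
  \mxcol_(t < T) Ubar t.

(* calK = [0 0; K 0] with K block lower triangular, K's (i,j) block = K_(i,j),
   0 <= j <= i <= T-2; i.e. block (i,j) of calK is K_(i-1,j) when j < i. *)
Definition calK m n (T : nat) (Kf : nat -> nat -> 'M[R]_(m, n)) :
  'M[R]_(\sum_(i < T) m, \sum_(j < T) n) :=
  \mxblock_(i < T, j < T)
     (if (j < i)%N then Kf i.-1 j else 0 : 'M[R]_(m, n)).

Definition inD m n (T : nat) (ub : 'cV[R]_(\sum_(t < T) m))
  (K : 'M[R]_(\sum_(i < T) m, \sum_(j < T) n)) : Prop :=
  forall i j : 'I_T, (i <= j)%N ->
    @submxblock R T T (fun _ => m) (fun _ => n) K i j = 0.

Definition hK n m (T : nat) (A : nat -> 'M[R]_n) (B : nat -> 'M[R]_(n, m))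
  (Sig0 W : 'M[R]_n) (K : 'M[R]_(\sum_(i < T) m, \sum_(j < T) n)) :=
  G0 T A *m Sig0 *m (G0 T A)^T
  + (Gw T A + Gu T A B *m K) *m Wbold T W *m (Gw T A + Gu T A B *m K)^T.

Definition J1conv n m (T : nat) (A : nat -> 'M[R]_n) (B : nat -> 'M[R]_(n, m))
  (Sig0 W : 'M[R]_n) (K : 'M[R]_(\sum_(i < T) m, \sum_(j < T) n)) : R :=
  \tr (PT n T *m hK A B Sig0 W K *m (PT n T)^T).

Definition inD1 n m (T : nat) (W : 'M[R]_n) (rho : R)
  (ub : 'cV[R]_(\sum_(t < T) m)) (K : 'M[R]_(\sum_(i < T) m, \sum_(j < T) n)) :
  Prop :=
  inD ub K /\
  (ub^T *m ub) 0 0 + \tr (K *m Wbold T W *m K^T) - rho ^+ 2 <= 0.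

Definition inD2 n m (T : nat) (A : nat -> 'M[R]_n) (B : nat -> 'M[R]_(n, m))
  (mu0 muf : 'cV[R]_n)
  (ub : 'cV[R]_(\sum_(t < T) m)) (K : 'M[R]_(\sum_(i < T) m, \sum_(j < T) n)) :
  Prop :=
  inD ub K /\ PT n T *m (Gu T A B *m ub + G0 T A *m mu0) - muf = 0.

End Defs.

Arguments inD {R m n} T ub K.
Arguments hK {R n m} T A B Sig0 W K.
Arguments J1conv {R n m} T A B Sig0 W K.
Arguments inD1 {R n m} T W rho ub K.
Arguments inD2 {R n m} T A B mu0 muf ub K.

Section ConvexProgram.
Variables (R : realType) (n m T : nat) (A : nat -> 'M[R]_n)
  (B : nat -> 'M[R]_(n, m)) (mu0 muf : 'cV[R]_n) (Sig0 W : 'M[R]_n) (rho : R).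

Definition conv_opt (ub : 'cV[R]_(\sum_(t < T) m))
  (K : 'M[R]_(\sum_(i < T) m, \sum_(j < T) n)) : Prop :=
  inD T ub K /\ inD1 T W rho ub K /\ inD2 T A B mu0 muf ub K /\
  forall ub' K', inD T ub' K' -> inD1 T W rho ub' K' ->
    inD2 T A B mu0 muf ub' K' ->
    J1conv T A B Sig0 W K <= J1conv T A B Sig0 W K'.
End ConvexProgram.

Arguments conv_opt {R n m} T A B mu0 muf Sig0 W rho ub K.

Section Stochastic.
Local Open Scope ring_scope.
Variables (d : measure_display) (Om : measurableType d) (R : realType)
  (P : probability Om R).

Definition L2vec n (X : Om -> 'cV[R]_n) : Prop :=
  forall i : 'I_n, (fun om => X om i ord0) \in Lfun P 2%:E.

Definition Emean n (X : Om -> 'cV[R]_n) : 'cV[R]_n :=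
  \col_i fine ('E_P[fun om => X om i ord0])%E.

Definition Covmx n (X : Om -> 'cV[R]_n) : 'M[R]_n :=
  \matrix_(i, j) fine (covariance P (fun om => X om i ord0) (fun om => X om j ord0)).

Definition Ecross n1 n2 (X : Om -> 'cV[R]_n1) (Y : Om -> 'cV[R]_n2) :
  'M[R]_(n1, n2) :=
  \matrix_(i, j) fine ('E_P[fun om => (X om i ord0 * Y om j ord0)%R])%E.

(* X ~ N(mu, Sig): square integrable, mean mu, covariance Sig, and
   characteristic function E[exp(i a^T X)] = exp(i a^T mu - a^T Sig a / 2)
   (written as its real and imaginary parts; this also covers degenerate Sig) *)
Definition gaussian n (X : Om -> 'cV[R]_n) (mu : 'cV[R]_n) (Sig : 'M[R]_n) :
  Prop :=
  [/\ L2vec X, Emean X = mu, Covmx X = Sig &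
   forall a : 'cV[R]_n,
     ('E_P[fun om => cos ((a^T *m X om) ord0 ord0)]
        = (cos ((a^T *m mu) ord0 ord0) * expR (- ((a^T *m Sig *m a) ord0 ord0) / 2))%:E)%E /\
     ('E_P[fun om => sin ((a^T *m X om) ord0 ord0)]
        = (sin ((a^T *m mu) ord0 ord0) * expR (- ((a^T *m Sig *m a) ord0 ord0) / 2))%:E)%E].

Definition u_proc m n (Ubar : nat -> 'cV[R]_m) (Kf : nat -> nat -> 'M[R]_(m, n))
  (w : nat -> Om -> 'cV[R]_n) (t : nat) (om : Om) : 'cV[R]_m :=
  Ubar t + \sum_(tau < t) Kf t.-1 tau *m w tau om.

Fixpoint x_proc n m (A : nat -> 'M[R]_n) (B : nat -> 'M[R]_(n, m))
  (x0 : Om -> 'cV[R]_n) (Ubar : nat -> 'cV[R]_m)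
  (Kf : nat -> nat -> 'M[R]_(m, n)) (w : nat -> Om -> 'cV[R]_n)
  (t : nat) (om : Om) : 'cV[R]_n :=
  match t with
  | 0 => x0 om
  | t'.+1 => A t' *m x_proc A B x0 Ubar Kf w t' om
             + B t' *m u_proc Ubar Kf w t' om + w t' om
  end.

Section Original.
Variables (n m T : nat) (A : nat -> 'M[R]_n) (B : nat -> 'M[R]_(n, m))
  (x0 : Om -> 'cV[R]_n) (w : nat -> Om -> 'cV[R]_n) (rho : R) (muf : 'cV[R]_n).

Definition J1stoch (Ubar : nat -> 'cV[R]_m) (Kf : nat -> nat -> 'M[R]_(m, n)) : R :=
  \tr (Covmx (x_proc A B x0 Ubar Kf w T)).

Definition orig_feasible (Ubar : nat -> 'cV[R]_m)
  (Kf : nat -> nat -> 'M[R]_(m, n)) : Prop :=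
  ('E_P[fun om => (\sum_(t < T) ((u_proc Ubar Kf w t om)^T *m u_proc Ubar Kf w t om) ord0 ord0)%R]
     - (rho ^+ 2)%:E <= 0)%E /\
  Emean (x_proc A B x0 Ubar Kf w T) = muf.

Definition orig_opt (Ubar : nat -> 'cV[R]_m) (Kf : nat -> nat -> 'M[R]_(m, n)) :
  Prop :=
  orig_feasible Ubar Kf /\
  forall Ubar' Kf', orig_feasible Ubar' Kf' -> J1stoch Ubar Kf <= J1stoch Ubar' Kf'.
End Original.
End Stochastic.

(* Main.v *)
Require Import Defs.
From HB Require Import structures.
From mathcomp Require Import all_boot all_order all_algebra.
From mathcomp Require Import all_classical all_reals all_analysis.
From mathcomp Require Import ring lra.
Import Order.TTheory GRing.Theory Num.Theory.
Set Implicit Arguments. Unset Strict Implicit. Unset Printing Implicit Defensive.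
Local Open Scope ring_scope.

Section Scalar.
Variables (d : measure_display) (Om : measurableType d) (R : realType)
  (P : probability Om R).

Lemma one_le2 : (1 <= (2%:E : \bar R))%E.
Proof. by rewrite lee_fin ler1n. Qed.
Lemma one_le1 : (1 <= (1%:E : \bar R))%E.
Proof. by rewrite lee_fin. Qed.

Definition L2 (f : Om -> R) := f \in Lfun P 2%:E.
Definition L1 (f : Om -> R) := f \in Lfun P 1.

Lemma L2D f g : L2 f -> L2 g -> L2 (fun x => f x + g x).
Proof.
move=> hf hg.
have h := @rpredD _ (hoelder_Lfun__canonical__Algebra_AddClosed P one_le2) _ _ hf hg.
exact h.
Qed.
Lemma L1D f g : L1 f -> L1 g -> L1 (fun x => f x + g x).
Proof.
move=> hf hg.
have h := @rpredD _ (hoelder_Lfun__canonical__Algebra_AddClosed P one_le1) _ _ hf hg.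
exact h.
Qed.
Lemma L2Z k f : L2 f -> L2 (fun x => k * f x).
Proof.
move=> hf; have h := @Lfun_scale _ _ _ P f k 2 (ler1n _ 2) hf.
rewrite /L2; under eq_fun do rewrite mulrC; exact h.
Qed.
Lemma L1Z k f : L1 f -> L1 (fun x => k * f x).
Proof.
move=> hf; have h := @Lfun_scale _ _ _ P f k 1 (lexx _) hf.
rewrite /L1; under eq_fun do rewrite mulrC; exact h.
Qed.
Lemma L2c c : L2 (fun _ => c).
Proof. exact: (@Lfun_cst _ _ _ P c 2). Qed.
Lemma L1c c : L1 (fun _ => c).
Proof. exact: (@Lfun_cst _ _ _ P c 1). Qed.
Lemma L2sum (I : Type) (s : seq I) (F : I -> Om -> R) :
  (forall i, L2 (F i)) -> L2 (fun x => \sum_(i <- s) F i x).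
Proof.
move=> hF; elim: s => [|a s IH].
  under eq_fun do rewrite big_nil; exact: L2c.
under eq_fun do rewrite big_cons; exact: L2D.
Qed.
Lemma L1sum (I : Type) (s : seq I) (F : I -> Om -> R) :
  (forall i, L1 (F i)) -> L1 (fun x => \sum_(i <- s) F i x).
Proof.
move=> hF; elim: s => [|a s IH].
  under eq_fun do rewrite big_nil; exact: L1c.
under eq_fun do rewrite big_cons; exact: L1D.
Qed.
Lemma L2_L1 f : L2 f -> L1 f.
Proof. by move=> h; apply: (Lfun_subset12 _ h); exact: fin_num_measure. Qed.
Lemma L2M f g : L2 f -> L2 g -> L1 (fun x => f x * g x).
Proof. by move=> hf hg; have h := Lfun2_mul_Lfun1 hf hg; exact h. Qed.

Definition Er (f : Om -> R) : R := fine ('E_P[f])%E.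

Lemma ErE f : L1 f -> ('E_P[f] = (Er f)%:E)%E.
Proof. by move=> h; rewrite /Er fineK //; exact: expectation_fin_num. Qed.
Lemma ErD f g : L1 f -> L1 g -> Er (fun x => f x + g x) = Er f + Er g.
Proof.
move=> hf hg; rewrite /Er.
have := expectationD hf hg => ->.
by rewrite fineD // expectation_fin_num.
Qed.
Lemma ErZ k f : L1 f -> Er (fun x => k * f x) = k * Er f.
Proof.
move=> hf; rewrite /Er.
have := expectationZl k hf.
have -> : k \o* f = (fun x => k * f x) by apply: funext => x /=; rewrite mulrC.
by move=> ->; rewrite fineM // expectation_fin_num.
Qed.
Lemma Erc c : Er (fun _ => c) = c.
Proof. by rewrite /Er; have -> := expectation_cst P c. Qed.
Lemma Ersum (I : Type) (s : seq I) (F : I -> Om -> R) :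
  (forall i, L1 (F i)) -> Er (fun x => \sum_(i <- s) F i x) = \sum_(i <- s) Er (F i).
Proof.
move=> hF; elim: s => [|a s IH].
  by under eq_fun do rewrite big_nil; rewrite big_nil Erc.
under eq_fun do rewrite big_cons; rewrite ErD ?IH ?big_cons //.
exact: L1sum.
Qed.
End Scalar.
Arguments L2 {d Om R} P f.
Arguments L1 {d Om R} P f.
Arguments Er {d Om R} P f.

Section Vec.
Variables (d : measure_display) (Om : measurableType d) (R : realType)
  (P : probability Om R).
Implicit Types (p q : nat).

Lemma L2ext (f g : Om -> R) : L2 P f -> (forall x, f x = g x) -> L2 P g.
Proof. by move=> h e; have <- : f = g by apply: funext. Qed.
Lemma L1ext (f g : Om -> R) : L1 P f -> (forall x, f x = g x) -> L1 P g.
Proof. by move=> h e; have <- : f = g by apply: funext. Qed.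
Lemma Erext (f g : Om -> R) : (forall x, f x = g x) -> Er P f = Er P g.
Proof. by move=> e; have <- : f = g by apply: funext. Qed.

Lemma L2vecD p (X Y : Om -> 'cV[R]_p) : L2vec P X -> L2vec P Y ->
  L2vec P (fun om => X om + Y om).
Proof. by move=> hX hY i; apply: L2ext (L2D (hX i) (hY i)) _ => x; rewrite mxE. Qed.

Lemma L2vecM p q (M : 'M[R]_(q, p)) (X : Om -> 'cV[R]_p) : L2vec P X ->
  L2vec P (fun om => M *m X om).
Proof.
move=> hX i.
have h := L2sum (index_enum 'I_p) (F := fun k x => M i k * X x k ord0) (fun k => L2Z (M i k) (hX k)).
apply: L2ext h _ => x; by rewrite mxE.
Qed.

Lemma L2vecc p (c : 'cV[R]_p) : L2vec P (fun _ => c).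
Proof. by move=> i; exact: L2c. Qed.

Lemma L2vecsum p (I : Type) (s : seq I) (F : I -> Om -> 'cV[R]_p) :
  (forall i, L2vec P (F i)) -> L2vec P (fun x => \sum_(i <- s) F i x).
Proof.
move=> hF j.
have h := L2sum s (F := fun i x => F i x j ord0) (fun i => hF i j).
by apply: L2ext h _ => x; rewrite summxE.
Qed.

Lemma L2vec_L1 p q (X : Om -> 'cV[R]_p) (Y : Om -> 'cV[R]_q) i j :
  L2vec P X -> L2vec P Y -> L1 P (fun om => X om i ord0 * Y om j ord0).
Proof. by move=> hX hY; exact: (L2M (hX i) (hY j)). Qed.

Lemma L2vec_L1' p (X : Om -> 'cV[R]_p) i :
  L2vec P X -> L1 P (fun om => X om i ord0).
Proof. by move=> hX; exact: (L2_L1 (hX i)). Qed.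

Lemma EmeanE p (X : Om -> 'cV[R]_p) i j : Emean P X i j = Er P (fun om => X om i ord0).
Proof. by rewrite mxE. Qed.
Lemma EcrossE p q (X : Om -> 'cV[R]_p) (Y : Om -> 'cV[R]_q) i j :
  Ecross P X Y i j = Er P (fun om => X om i ord0 * Y om j ord0).
Proof. by rewrite mxE. Qed.

Lemma EmeanD p (X Y : Om -> 'cV[R]_p) : L2vec P X -> L2vec P Y ->
  Emean P (fun om => X om + Y om) = Emean P X + Emean P Y.
Proof.
move=> hX hY; apply/matrixP => i j; rewrite EmeanE [in RHS]mxE !EmeanE.
rewrite (Erext (g := fun x => X x i ord0 + Y x i ord0)); last by move=> x; rewrite mxE.
rewrite ErD //; exact: L2vec_L1'.
Qed.

Lemma EmeanM p q (M : 'M[R]_(q, p)) (X : Om -> 'cV[R]_p) : L2vec P X ->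
  Emean P (fun om => M *m X om) = M *m Emean P X.
Proof.
move=> hX; apply/matrixP => i j; rewrite EmeanE mxE.
rewrite (Erext (g := fun x => \sum_(l <- index_enum 'I_p) M i l * X x l ord0)); last by move=> x; rewrite mxE.
rewrite Ersum; last by move=> l; apply: L1Z; exact: L2vec_L1'.
by apply: eq_bigr => l _; rewrite ErZ ?EmeanE //; exact: L2vec_L1'.
Qed.

Lemma Emeanc p (c : 'cV[R]_p) : Emean P (fun _ => c) = c.
Proof. by apply/matrixP => i j; rewrite EmeanE Erc (ord1 j). Qed.

Lemma Emeansum p (I : Type) (s : seq I) (F : I -> Om -> 'cV[R]_p) :
  (forall i, L2vec P (F i)) ->
  Emean P (fun x => \sum_(i <- s) F i x) = \sum_(i <- s) Emean P (F i).
Proof.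
move=> hF; apply/matrixP => i j; rewrite EmeanE summxE.
rewrite (Erext (g := fun x => \sum_(l <- s) F l x i ord0)); last by move=> x; rewrite summxE.
rewrite Ersum; last by move=> l; exact: L2vec_L1'.
by apply: eq_bigr => l _; rewrite EmeanE.
Qed.

Lemma EcrossDl p q (X Y : Om -> 'cV[R]_p) (Z : Om -> 'cV[R]_q) :
  L2vec P X -> L2vec P Y -> L2vec P Z ->
  Ecross P (fun om => X om + Y om) Z = Ecross P X Z + Ecross P Y Z.
Proof.
move=> hX hY hZ; apply/matrixP => i j; rewrite EcrossE [in RHS]mxE !EcrossE.
rewrite (Erext (g := fun x => X x i ord0 * Z x j ord0 + Y x i ord0 * Z x j ord0)); last by move=> x; rewrite mxE mulrDl.
by rewrite ErD //; exact: L2vec_L1.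
Qed.

Lemma EcrossDr p q (X : Om -> 'cV[R]_p) (Y Z : Om -> 'cV[R]_q) :
  L2vec P X -> L2vec P Y -> L2vec P Z ->
  Ecross P X (fun om => Y om + Z om) = Ecross P X Y + Ecross P X Z.
Proof.
move=> hX hY hZ; apply/matrixP => i j; rewrite EcrossE [in RHS]mxE !EcrossE.
rewrite (Erext (g := fun x => X x i ord0 * Y x j ord0 + X x i ord0 * Z x j ord0)); last by move=> x; rewrite mxE mulrDr.
by rewrite ErD //; exact: L2vec_L1.
Qed.

Lemma Ecross_tr p q (X : Om -> 'cV[R]_p) (Y : Om -> 'cV[R]_q) :
  Ecross P Y X = (Ecross P X Y)^T.
Proof.
apply/matrixP => i j; rewrite EcrossE [in RHS]mxE EcrossE.
by apply: Erext => x; rewrite mulrC.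
Qed.

Lemma EcrossMl p q r (M : 'M[R]_(r, p)) (X : Om -> 'cV[R]_p) (Y : Om -> 'cV[R]_q) :
  L2vec P X -> L2vec P Y ->
  Ecross P (fun om => M *m X om) Y = M *m Ecross P X Y.
Proof.
move=> hX hY; apply/matrixP => i j; rewrite EcrossE mxE.
rewrite (Erext (g := fun x => \sum_(l <- index_enum 'I_p) M i l * (X x l ord0 * Y x j ord0))); last first.
  by move=> x; rewrite mxE mulr_suml; apply: eq_bigr => l _; rewrite mulrA.
rewrite Ersum; last by move=> l; apply: L1Z; exact: L2vec_L1.
by apply: eq_bigr => l _; rewrite ErZ ?EcrossE //; exact: L2vec_L1.
Qed.

Lemma EcrossMr p q r (M : 'M[R]_(r, q)) (X : Om -> 'cV[R]_p) (Y : Om -> 'cV[R]_q) :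
  L2vec P X -> L2vec P Y ->
  Ecross P X (fun om => M *m Y om) = Ecross P X Y *m M^T.
Proof.
move=> hX hY; rewrite Ecross_tr EcrossMl // Ecross_tr trmx_mul trmxK //.
Qed.

Lemma Ecrosscl p q (c : 'cV[R]_p) (Y : Om -> 'cV[R]_q) : L2vec P Y ->
  Ecross P (fun _ => c) Y = c *m (Emean P Y)^T.
Proof.
move=> hY; apply/matrixP => i j; rewrite EcrossE mxE big_ord1 !mxE.
by rewrite ErZ -?EmeanE //; exact: L2vec_L1'.
Qed.

Lemma Ecrosscr p q (X : Om -> 'cV[R]_p) (c : 'cV[R]_q) : L2vec P X ->
  Ecross P X (fun _ => c) = Emean P X *m c^T.
Proof.
by move=> hX; rewrite Ecross_tr Ecrosscl // trmx_mul trmxK.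
Qed.

Lemma Ecrosssuml p q (I : Type) (s : seq I) (F : I -> Om -> 'cV[R]_p) (Y : Om -> 'cV[R]_q) :
  (forall i, L2vec P (F i)) -> L2vec P Y ->
  Ecross P (fun x => \sum_(i <- s) F i x) Y = \sum_(i <- s) Ecross P (F i) Y.
Proof.
move=> hF hY; apply/matrixP => i j; rewrite EcrossE summxE.
rewrite (Erext (g := fun x => \sum_(l <- s) F l x i ord0 * Y x j ord0)); last by move=> x; rewrite summxE mulr_suml.
rewrite Ersum; last by move=> l; exact: L2vec_L1.
by apply: eq_bigr => l _; rewrite EcrossE.
Qed.

Lemma Ecrosssumr p q (I : Type) (s : seq I) (X : Om -> 'cV[R]_p) (F : I -> Om -> 'cV[R]_q) :
  L2vec P X -> (forall i, L2vec P (F i)) ->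
  Ecross P X (fun x => \sum_(i <- s) F i x) = \sum_(i <- s) Ecross P X (F i).
Proof.
move=> hX hF; rewrite Ecross_tr Ecrosssuml // raddf_sum /=.
by apply: eq_bigr => i _; rewrite [RHS]Ecross_tr.
Qed.

Lemma CovmxE p (X : Om -> 'cV[R]_p) : L2vec P X ->
  Covmx P X = Ecross P X X - Emean P X *m (Emean P X)^T.
Proof.
move=> hX; apply/matrixP => i j.
have -> : (Ecross P X X - Emean P X *m (Emean P X)^T) i j =
  Ecross P X X i j - Emean P X i ord0 * Emean P X j ord0.
  by rewrite !mxE big_ord1 !mxE.
rewrite EcrossE !EmeanE mxE.
rewrite covarianceE; [|exact: L2vec_L1'|exact: L2vec_L1'|exact: (L2vec_L1 i j hX hX)].
rewrite (ErE (L2vec_L1' i hX)) (ErE (L2vec_L1' j hX)).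
have h := ErE (L2vec_L1 i j hX hX).
have -> : ((fun om => X om i ord0) * (fun om => X om j ord0))%R = (fun om => X om i ord0 * X om j ord0) by [].
by rewrite h -EFinM -EFinB.
Qed.
End Vec.

Section Key.
Variables (d : measure_display) (Om : measurableType d) (R : realType)
  (P : probability Om R).

Lemma key k p n (Z : 'I_k -> Om -> 'cV[R]_n) (M : 'I_k -> 'M[R]_(p, n)) (c : 'cV[R]_p) :
  (forall j, L2vec P (Z j)) -> (forall j, Emean P (Z j) = 0) ->
  (forall i j, i != j -> Ecross P (Z i) (Z j) = 0) ->
  [/\ L2vec P (fun om => c + \sum_j M j *m Z j om),
      Emean P (fun om => c + \sum_j M j *m Z j om) = c &
      Ecross P (fun om => c + \sum_j M j *m Z j om) (fun om => c + \sum_j M j *m Z j om)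
      = c *m c^T + \sum_j M j *m Ecross P (Z j) (Z j) *m (M j)^T].
Proof.
move=> hZ hE hC.
have hMZ : forall j, L2vec P (fun om => M j *m Z j om) by move=> j; exact: L2vecM.
have hS : L2vec P (fun om => \sum_j M j *m Z j om).
  exact: (L2vecsum (index_enum _) (F := fun j om => M j *m Z j om) hMZ).
have ES : Emean P (fun om => \sum_j M j *m Z j om) = 0.
  rewrite (Emeansum (index_enum _) (F := fun j om => M j *m Z j om)) //.
  by apply: big1 => j _; rewrite EmeanM // hE mulmx0.
have hY := L2vecD (L2vecc P c) hS.
have EY : Emean P (fun om => c + \sum_j M j *m Z j om) = c.
  by rewrite (EmeanD (L2vecc P c) hS) Emeanc ES addr0.
split => //.
rewrite (EcrossDl (X := fun _ => c)) ?Ecrosscl ?EY //; [|exact: L2vecc].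
rewrite (EcrossDr (Y := fun _ => c)) ?Ecrosscr ?ES ?mul0mx ?add0r //; [|exact: L2vecc].
congr (_ + _).
rewrite (Ecrosssuml (index_enum _) (F := fun j om => M j *m Z j om)) //.
apply: eq_bigr => i _.
rewrite EcrossMl // (Ecrosssumr (index_enum _) (F := fun j om => M j *m Z j om)) //.
rewrite (bigD1 i) //= big1 ?addr0; first by rewrite EcrossMr // mulmxA.
by move=> j ji; rewrite EcrossMr // hC ?mul0mx // eq_sym.
Qed.
End Key.

Section Det.
Variables (R : realType) (n m T : nat) (A : nat -> 'M[R]_n) (B : nat -> 'M[R]_(n, m)).

Definition Kb (Kf : nat -> nat -> 'M[R]_(m, n)) (i j : nat) : 'M[R]_(m, n) :=
  if (j < i)%N then Kf i.-1 j else 0.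

Definition Lm (Kf : nat -> nat -> 'M[R]_(m, n)) (j : nat) : 'M[R]_n :=
  Phi A T j.+1 + \sum_(i < T) Phi A T i.+1 *m B i *m Kb Kf i j.

Lemma PhiS t j : (j <= t)%N -> Phi A t.+1 j = A t *m Phi A t j.
Proof. by move=> h; rewrite /Phi subSn //= subnKC. Qed.

Lemma Phinn t : Phi A t t = 1%:M.
Proof. by rewrite /Phi subnn. Qed.

Lemma PT_sel p (F : 'I_T.+1 -> 'M[R]_(n, p)) :
  \sum_(i < T.+1) ((if i == ord_max then 1%:M else 0) : 'M[R]_n) *m F i = F ord_max.
Proof.
rewrite (bigD1 ord_max) //= eqxx mul1mx big1 ?addr0 //.
by move=> i /negbTE ->; rewrite mul0mx.
Qed.

Lemma PT_G0 : PT R n T *m G0 T A = Phi A T 0.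
Proof. by rewrite /PT /G0 mul_mxrow_mxcol PT_sel. Qed.

Lemma PT_Gw : PT R n T *m Gw T A = \mxrow_(j < T) Phi A T j.+1.
Proof.
rewrite /PT /Gw mul_mxrow_mxblock; apply: eq_mxrow => j.
by rewrite (PT_sel (fun i => if (j.+1 <= i)%N then Phi A i j.+1 else 0)) /= ltn_ord.
Qed.

Lemma PT_Gu : PT R n T *m Gu T A B = \mxrow_(j < T) (Phi A T j.+1 *m B j).
Proof.
rewrite /PT /Gu mul_mxrow_mxblock; apply: eq_mxrow => j.
by rewrite (PT_sel (fun i => if (j.+1 <= i)%N then Phi A i j.+1 *m B j else 0)) /= ltn_ord.
Qed.

Lemma mxrow_calK p (X : 'I_T -> 'M[R]_(p, m)) Kf :
  \mxrow_(j < T) X j *m calK T Kf = \mxrow_(j < T) \sum_(i < T) X i *m Kb Kf i j.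
Proof. by rewrite /calK mul_mxrow_mxblock. Qed.

Lemma PT_M Kf : PT R n T *m (Gw T A + Gu T A B *m calK T Kf) = \mxrow_(j < T) Lm Kf j.
Proof.
rewrite mulmxDr mulmxA PT_Gw PT_Gu mxrow_calK -mxrowD.
by apply: eq_mxrow => j.
Qed.

Lemma mxrow_Wbold p (X : 'I_T -> 'M[R]_(p, n)) W :
  \mxrow_(j < T) X j *m Wbold T W *m (\mxrow_(j < T) X j)^T
  = \sum_(j < T) X j *m W *m (X j)^T.
Proof. by rewrite /Wbold mul_mxrow_mxdiag tr_mxrow mul_mxrow_mxcol. Qed.

Lemma J1convE Sig0 W (K : 'M[R]_(\sum_(i < T) m, \sum_(j < T) n)) :
  J1conv T A B Sig0 W K =
  \tr (Phi A T 0 *m Sig0 *m (Phi A T 0)^T)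
  + \tr (PT R n T *m (Gw T A + Gu T A B *m K) *m Wbold T W
         *m (PT R n T *m (Gw T A + Gu T A B *m K))^T).
Proof.
rewrite /J1conv /hK -PT_G0 mulmxDr mulmxDl mxtraceD !trmx_mul !mulmxA.
by [].
Qed.

Lemma PT_mean (Ubar : nat -> 'cV[R]_m) (mu0 : 'cV[R]_n) :
  PT R n T *m (Gu T A B *m vcat T Ubar + G0 T A *m mu0)
  = Phi A T 0 *m mu0 + \sum_(j < T) Phi A T j.+1 *m B j *m Ubar j.
Proof.
rewrite mulmxDr !mulmxA PT_G0 PT_Gu addrC; congr (_ + _).
by rewrite /vcat mul_mxrow_mxcol.
Qed.

Lemma vcat_sq (Ubar : nat -> 'cV[R]_m) :
  (vcat T Ubar)^T *m vcat T Ubar = \sum_(t < T) (Ubar t)^T *m Ubar t.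
Proof. by rewrite /vcat tr_mxcol mul_mxrow_mxcol. Qed.

Lemma calK_tr Kf W :
  \tr (calK T Kf *m Wbold T W *m (calK T Kf)^T)
  = \sum_(t < T) \sum_(j < T) \tr (Kb Kf t j *m W *m (Kb Kf t j)^T).
Proof.
rewrite /calK /Wbold mul_mxblock_mxdiag tr_mxblock mul_mxblock mxtrace_mxblock.
apply: eq_bigr => t _; rewrite raddf_sum /=.
by apply: eq_bigr => j _.
Qed.
End Det.

Section Stoch.
Variables (d : measure_display) (Om : measurableType d) (R : realType)
  (P : probability Om R) (n m T : nat)
  (A : nat -> 'M[R]_n) (B : nat -> 'M[R]_(n, m))
  (x0 : Om -> 'cV[R]_n) (w : nat -> Om -> 'cV[R]_n)
  (Ubar : nat -> 'cV[R]_m) (Kf : nat -> nat -> 'M[R]_(m, n)).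

Lemma x_closed t om : x_proc A B x0 Ubar Kf w t om =
  Phi A t 0 *m x0 om
  + \sum_(j < t) Phi A t j.+1 *m (B j *m u_proc Ubar Kf w j om + w j om).
Proof.
elim: t => [|t IH].
  by rewrite /= Phinn mul1mx big_ord0 addr0.
rewrite /= IH big_ord_recr /= Phinn mul1mx (PhiS _ (leq0n t)) mulmxDr mulmx_sumr.
rewrite mulmxA -!addrA; congr (_ + (_ + _)).
by apply: eq_bigr => j _; rewrite (PhiS _ (ltn_ord j)) mulmxA.
Qed.

Lemma u_closed t om : (t <= T)%N ->
  u_proc Ubar Kf w t om = Ubar t + \sum_(j < T) Kb Kf t j *m w j om.
Proof.
move=> tT; rewrite /u_proc; congr (_ + _).
rewrite (big_ord_widen T (fun j => Kf t.-1 j *m w j om) tT) big_mkcond /=.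
by apply: eq_bigr => j _; rewrite /Kb; case: ifP => //; rewrite mul0mx.
Qed.

Lemma zmod_id (V : zmodType) (a b c d0 e : V) : a + (b + c + d0) = e + b + (a - e + (d0 + c)).
Proof. by rewrite addrACA [e + (a - e)]addrC subrK [d0 + c]addrC !addrA. Qed.

Definition Zn (mu0 : 'cV[R]_n) (j : nat) : Om -> 'cV[R]_n :=
  match j with 0 => fun om => x0 om - mu0 | j'.+1 => w j' end.
Definition Mn (j : nat) : 'M[R]_n :=
  match j with 0 => Phi A T 0 | j'.+1 => Lm T A B Kf j' end.

Lemma xT_form mu0 om : x_proc A B x0 Ubar Kf w T om =
  (Phi A T 0 *m mu0 + \sum_(j < T) Phi A T j.+1 *m B j *m Ubar j)
  + \sum_(j < T.+1) Mn j *m Zn mu0 j om.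
Proof.
rewrite x_closed.
rewrite -(big_mkord xpredT (fun j => Mn j *m Zn mu0 j om)) big_nat_recl // big_mkord /=.
under eq_bigr => j _ do rewrite (u_closed _ (ltnW (ltn_ord j))) !mulmxDr.
rewrite !big_split /=.
under [X in _ = _ + (_ + X)]eq_bigr => j _ do rewrite /Lm mulmxDl mulmx_suml.
rewrite big_split /= exchange_big /=.
have -> : \sum_(i < T) Phi A T i.+1 *m (B i *m \sum_(j < T) Kb Kf i j *m w j om)
  = \sum_(i < T) \sum_(j < T) Phi A T i.+1 *m B i *m Kb Kf i j *m w j om.
  by apply: eq_bigr => i _; rewrite !mulmx_sumr; apply: eq_bigr => j _; rewrite !mulmxA.
rewrite mulmxBr.
have -> : \sum_(i < T) Phi A T i.+1 *m (B i *m Ubar i) = \sum_(i < T) Phi A T i.+1 *m B i *m Ubar i.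
  by apply: eq_bigr => i _; rewrite mulmxA.
exact: zmod_id.
Qed.
End Stoch.

Section Main.
Variables (d : measure_display) (Om : measurableType d) (R : realType)
  (P : probability Om R) (n m T : nat)
  (A : nat -> 'M[R]_n) (B : nat -> 'M[R]_(n, m))
  (mu0 : 'cV[R]_n) (Sig0 W : 'M[R]_n)
  (x0 : Om -> 'cV[R]_n) (w : nat -> Om -> 'cV[R]_n).
Hypotheses (hx0 : gaussian P x0 mu0 Sig0)
  (hw : forall t, (t < T)%N -> gaussian P (w t) 0 W)
  (hwunc : forall t s, (t < T)%N -> (s < T)%N -> t <> s ->
     Ecross P (w t) (w s) = 0)
  (hx0w : forall t, (t < T)%N -> Ecross P x0 (w t) = 0).

Lemma hwL2 t : (t < T)%N -> L2vec P (w t).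
Proof. by move=> h; case: (hw h). Qed.
Lemma hwE t : (t < T)%N -> Emean P (w t) = 0.
Proof. by move=> h; case: (hw h). Qed.
Lemma hwC t : (t < T)%N -> Ecross P (w t) (w t) = W.
Proof.
move=> h; case: (hw h) => hL hE hC _.
by move: hC; rewrite CovmxE // hE mul0mx subr0.
Qed.
Lemma hx0L2 : L2vec P x0. Proof. by case: hx0. Qed.
Lemma hx0E : Emean P x0 = mu0. Proof. by case: hx0. Qed.

Lemma hZL2 (j : 'I_T.+1) : L2vec P (Zn x0 w mu0 j).
Proof.
case: j => [[|j] hj] /=.
  exact: (L2vecD hx0L2 (L2vecc P (- mu0))).
exact: hwL2.
Qed.

Lemma hZE (j : 'I_T.+1) : Emean P (Zn x0 w mu0 j) = 0.
Proof.
case: j => [[|j] hj] /=.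
  by rewrite (EmeanD hx0L2 (L2vecc P (- mu0))) Emeanc hx0E subrr.
exact: hwE.
Qed.

Lemma hZ0C : Ecross P (Zn x0 w mu0 0) (Zn x0 w mu0 0) = Sig0.
Proof.
have hc : L2vec P (fun _ => - mu0) := L2vecc P _.
have hx := hx0L2.
have hxc := L2vecD hx hc.
rewrite /= (EcrossDl hx hc hxc) (EcrossDr hx hx hc) (EcrossDr hc hx hc).
rewrite (Ecrosscr _ hx) (Ecrosscl _ hx) (Ecrosscl _ hc) Emeanc hx0E.
case: hx0 => hL _ hC _; rewrite CovmxE // hx0E in hC.
rewrite -hC !raddfN /=.
by rewrite subrr addr0.
Qed.
Lemma hZC (i j : 'I_T.+1) : i != j -> Ecross P (Zn x0 w mu0 i) (Zn x0 w mu0 j) = 0.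
Proof.
have hc : L2vec P (fun _ => - mu0) := L2vecc P _.
have hx := hx0L2.
have h0 : forall j', (j' < T)%N -> Ecross P (Zn x0 w mu0 0) (w j') = 0.
  move=> j' hj; rewrite /= (EcrossDl hx hc (hwL2 hj)) hx0w // (Ecrosscl _ (hwL2 hj)).
  by rewrite hwE // trmx0 mulmx0 addr0.
case: i j => [[|i] hi] [[|j] hj] //= hij.
- exact: h0.
- by rewrite Ecross_tr h0 ?trmx0.
- by move: hij; rewrite -val_eqE /= eqSS => /eqP hij; apply: hwunc.
Qed.

Section Pol.
Variables (Ubar : nat -> 'cV[R]_m) (Kf : nat -> nat -> 'M[R]_(m, n)).

Definition cT := Phi A T 0 *m mu0 + \sum_(j < T) Phi A T j.+1 *m B j *m Ubar j.

Lemma xT_key :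
  [/\ L2vec P (x_proc A B x0 Ubar Kf w T),
      Emean P (x_proc A B x0 Ubar Kf w T) = cT &
      Covmx P (x_proc A B x0 Ubar Kf w T) =
        Phi A T 0 *m Sig0 *m (Phi A T 0)^T
        + \sum_(j < T) Lm T A B Kf j *m W *m (Lm T A B Kf j)^T].
Proof.
have e : x_proc A B x0 Ubar Kf w T =
  (fun om => cT + \sum_(j < T.+1) Mn T A B Kf j *m Zn x0 w mu0 j om).
  by apply: funext => om; rewrite (xT_form T A B x0 w Ubar Kf mu0).
rewrite e.
have [h1 h2 h3] := key (Z := fun j : 'I_T.+1 => Zn x0 w mu0 j)
   (fun j : 'I_T.+1 => Mn T A B Kf j) cT hZL2 hZE hZC.
split => //; rewrite CovmxE // h3 h2 addrC addKr.
rewrite -(big_mkord xpredT (fun j => Mn T A B Kf j *m Ecross P (Zn x0 w mu0 j) (Zn x0 w mu0 j) *m (Mn T A B Kf j)^T)).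
rewrite big_nat_recl // big_mkord /= hZ0C; congr (_ + _).
by apply: eq_bigr => j _; rewrite hwC.
Qed.

Lemma u_key t : (t < T)%N ->
  [/\ L2vec P (u_proc Ubar Kf w t),
      Emean P (u_proc Ubar Kf w t) = Ubar t &
      Ecross P (u_proc Ubar Kf w t) (u_proc Ubar Kf w t) =
        Ubar t *m (Ubar t)^T
        + \sum_(j < T) Kb Kf t j *m W *m (Kb Kf t j)^T].
Proof.
move=> tT.
have e : u_proc Ubar Kf w t =
  (fun om => Ubar t + \sum_(j < T) Kb Kf t j *m w j om).
  by apply: funext => om; rewrite (@u_closed _ _ _ _ _ T) // ltnW.
rewrite e.
have hL : forall j : 'I_T, L2vec P (w j) by move=> j; exact: hwL2.
have hE : forall j : 'I_T, Emean P (w j) = 0 by move=> j; exact: hwE.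
have hC : forall i j : 'I_T, i != j -> Ecross P (w i) (w j) = 0.
  by move=> i j hij; apply: hwunc => // h; move/eqP: hij; apply; apply: val_inj.
have [h1 h2 h3] := key (Z := fun j : 'I_T => w j)
   (fun j : 'I_T => Kb Kf t j) (Ubar t) hL hE hC.
split => //; rewrite h3; congr (_ + _).
by apply: eq_bigr => j _; rewrite hwC.
Qed.

Lemma Eu_form :
  ('E_P[fun om => (\sum_(t < T) ((u_proc Ubar Kf w t om)^T
                     *m u_proc Ubar Kf w t om) ord0 ord0)%R]
   = (\sum_(t < T) \tr (Ecross P (u_proc Ubar Kf w t) (u_proc Ubar Kf w t)))%:E)%E.
Proof.
have e : (fun om => (\sum_(t < T) ((u_proc Ubar Kf w t om)^T
                     *m u_proc Ubar Kf w t om) ord0 ord0)%R)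
  = (fun om => \sum_(t < T) \sum_(i < m) u_proc Ubar Kf w t om i ord0 * u_proc Ubar Kf w t om i ord0).
  apply: funext => om; apply: eq_bigr => t _; rewrite mxE.
  by apply: eq_bigr => i _; rewrite mxE.
have hL : forall t : 'I_T, L2vec P (u_proc Ubar Kf w t) by move=> t; case: (u_key (ltn_ord t)).
have hL1 : forall t : 'I_T, L1 P (fun om => \sum_(i < m) u_proc Ubar Kf w t om i ord0 * u_proc Ubar Kf w t om i ord0).
  move=> t; apply: (L1sum (index_enum _) (F := fun i om => u_proc Ubar Kf w t om i ord0 * u_proc Ubar Kf w t om i ord0)) => i.
  exact: L2vec_L1.
rewrite e ErE; last exact: (L1sum (index_enum _) (F := fun (t : 'I_T) om => \sum_(i < m) u_proc Ubar Kf w t om i ord0 * u_proc Ubar Kf w t om i ord0)).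
congr (_%:E).
rewrite (Ersum (index_enum _) (F := fun (t : 'I_T) om => \sum_(i < m) u_proc Ubar Kf w t om i ord0 * u_proc Ubar Kf w t om i ord0)) //.
apply: eq_bigr => t _.
rewrite (Ersum (index_enum _) (F := fun i om => u_proc Ubar Kf w t om i ord0 * u_proc Ubar Kf w t om i ord0)); last first.
  by move=> i; exact: L2vec_L1.
by rewrite /mxtrace; apply: eq_bigr => i _; rewrite EcrossE.
Qed.
End Pol.
End Main.

Lemma inD_calK (R : realType) m n T (Ubar : nat -> 'cV[R]_m) (Kf : nat -> nat -> 'M[R]_(m, n)) :
  inD T (vcat T Ubar) (calK T Kf).
Proof. by move=> i j hij; rewrite /calK mxblockK ltnNge hij. Qed.

Section Part1.
Variables (d : measure_display) (Om : measurableType d) (R : realType)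
  (P : probability Om R) (n m T : nat)
  (A : nat -> 'M[R]_n) (B : nat -> 'M[R]_(n, m))
  (mu0 : 'cV[R]_n) (Sig0 W : 'M[R]_n)
  (x0 : Om -> 'cV[R]_n) (w : nat -> Om -> 'cV[R]_n) (rho : R) (muf : 'cV[R]_n).
Hypotheses (hx0 : gaussian P x0 mu0 Sig0)
  (hw : forall t, (t < T)%N -> gaussian P (w t) 0 W)
  (hwunc : forall t s, (t < T)%N -> (s < T)%N -> t <> s ->
     Ecross P (w t) (w s) = 0)
  (hx0w : forall t, (t < T)%N -> Ecross P x0 (w t) = 0).
Variables (Ubar : nat -> 'cV[R]_m) (Kf : nat -> nat -> 'M[R]_(m, n)).

Lemma part1_J : J1stoch P T A B x0 w Ubar Kf = J1conv T A B Sig0 W (calK T Kf).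
Proof.
have [_ _ hC] := xT_key A B hx0 hw hwunc hx0w Ubar Kf.
by rewrite /J1stoch hC J1convE PT_M mxrow_Wbold mxtraceD.
Qed.

Lemma part1_mean : Emean P (x_proc A B x0 Ubar Kf w T) = muf
          <-> inD2 T A B mu0 muf (vcat T Ubar) (calK T Kf).
Proof.
have [_ hE _] := xT_key A B hx0 hw hwunc hx0w Ubar Kf.
rewrite hE /inD2 PT_mean /cT; split.
  by move=> <-; split; [exact: inD_calK | rewrite subrr].
by case=> _ /eqP; rewrite subr_eq0 => /eqP.
Qed.

Lemma part1_u :
  ((('E_P[fun om => (\sum_(t < T) ((u_proc Ubar Kf w t om)^T
                                   *m u_proc Ubar Kf w t om) ord0 ord0)%R]
       - (rho ^+ 2)%:E <= 0)%E)
   <-> inD1 T W rho (vcat T Ubar) (calK T Kf)).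
Proof.
rewrite (Eu_form hw hwunc) -EFinB lee_fin /inD1 vcat_sq calK_tr summxE.
have -> : \sum_(t < T) \tr (Ecross P (u_proc Ubar Kf w t) (u_proc Ubar Kf w t))
  = \sum_(t < T) ((Ubar t)^T *m Ubar t) ord0 ord0
    + \sum_(t < T) \sum_(j < T) \tr (Kb Kf t j *m W *m (Kb Kf t j)^T).
  rewrite -big_split /=; apply: eq_bigr => t _.
  have [_ _ hC] := u_key hw hwunc Ubar Kf (ltn_ord t).
  rewrite hC mxtraceD mxtrace_mulC trace_mx11 raddf_sum /=; congr (_ + _).
split; first by move=> h; split => //; exact: inD_calK.
by case.
Qed.
End Part1.

Section Conv.
Variable R : realType.

Definition qf p N (Wm : 'M[R]_N) (X : 'M[R]_(p, N)) : R := \tr (X *m Wm *m X^T).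

Lemma qf_mix p N (Wm : 'M[R]_N) (X Y : 'M[R]_(p, N)) l :
  qf Wm (l *: X + (1 - l) *: Y)
  = l * qf Wm X + (1 - l) * qf Wm Y - l * (1 - l) * qf Wm (X - Y).
Proof.
set a := qf Wm X; set e := qf Wm Y.
set b := \tr (X *m Wm *m Y^T); set c := \tr (Y *m Wm *m X^T).
have e1 : qf Wm (l *: X + (1 - l) *: Y) = l * (l * a + (1 - l) * c) + (1 - l) * (l * b + (1 - l) * e).
  rewrite /qf !raddfD /= !linearZ /= !mulmxDl -!scalemxAl !raddfD /= !mxtraceZ.
  by [].
have e2 : qf Wm (X - Y) = a - c - (b - e).
  rewrite /qf !raddfB /= !mulmxBl !raddfB /=.
  by [].
rewrite e1 e2; ring.
Qed.

Lemma qf_ge0 p N (Wm : 'M[R]_N) (X : 'M[R]_(p, N)) :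
  (forall v : 'cV[R]_N, 0 <= (v^T *m Wm *m v) ord0 ord0) -> 0 <= qf Wm X.
Proof.
move=> hW; rewrite /qf /mxtrace; apply: sumr_ge0 => i _.
have -> : (X *m Wm *m X^T) i i = (row i X *m Wm *m (row i X)^T) ord0 ord0.
  by rewrite -row_mul !mxE; apply: eq_bigr => k _; rewrite !mxE.
by have := hW (row i X)^T; rewrite trmxK.
Qed.

Lemma psd1 N : forall v : 'cV[R]_N, 0 <= (v^T *m 1%:M *m v) ord0 ord0.
Proof.
move=> v; rewrite mulmx1 mxE; apply: sumr_ge0 => i _.
by rewrite mxE -expr2 sqr_ge0.
Qed.

Lemma qf_Wbold p T n (W : 'M[R]_n) (X : 'M[R]_(p, \sum_(j < T) n)) :
  (forall v : 'cV[R]_n, 0 <= (v^T *m W *m v) ord0 ord0) -> 0 <= qf (Wbold T W) X.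
Proof.
move=> hW; rewrite /qf -[X]submxrowK mxrow_Wbold raddf_sum /=.
by apply: sumr_ge0 => j _; exact: qf_ge0.
Qed.

Lemma submxblock_mix T m n (K1 K2 : 'M[R]_(\sum_(i < T) m, \sum_(j < T) n)) l i j :
  submxblock (p_ := fun _ => m) (q_ := fun _ => n) (l *: K1 + (1 - l) *: K2) i j
  = l *: submxblock K1 i j + (1 - l) *: submxblock K2 i j.
Proof. by apply/matrixP => a b; rewrite !mxE. Qed.

Lemma aff_mix p q r s (X : 'M[R]_(p, q)) (Y : 'M[R]_(q, r)) (Z : 'M[R]_(q, s))
  (K1 K2 : 'M[R]_(r, s)) l :
  X *m (Z + Y *m (l *: K1 + (1 - l) *: K2))
  = l *: (X *m (Z + Y *m K1)) + (1 - l) *: (X *m (Z + Y *m K2)).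
Proof.
rewrite !mulmxDr -!scalemxAr !scalerDr addrACA -scalerDl.
have -> : l + (1 - l) = 1 by ring.
by rewrite scale1r.
Qed.
End Conv.

Lemma part2 (R : realType) m n T (ub : 'cV[R]_(\sum_(t < T) m))
  (K : 'M[R]_(\sum_(i < T) m, \sum_(j < T) n)) :
  inD T ub K -> exists Ubar Kf, ub = vcat T Ubar /\ K = calK T Kf.
Proof.
move=> hK.
pose Ubar := fun t : nat => match @insub _ _ 'I_T t with
  | Some i => submxcol (p_ := fun _ => m) ub i | None => 0 end.
pose Kf := fun i j : nat => match @insub _ _ 'I_T i.+1, @insub _ _ 'I_T j with
  | Some a, Some b => submxblock (p_ := fun _ => m) (q_ := fun _ => n) K a b
  | _, _ => 0 end.
exists Ubar, Kf; split.
  rewrite /vcat -[LHS]submxcolK; apply: eq_mxcol => i.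
  by rewrite /Ubar valK.
rewrite /calK -[LHS]submxblockK; apply: eq_mxblock => i j.
case: ltnP => hij.
  rewrite /Kf prednK; last by apply: leq_ltn_trans hij.
  by rewrite !valK.
exact: hK.
Qed.

Section Part4.
Variables (R : realType) (n m T : nat) (A : nat -> 'M[R]_n) (B : nat -> 'M[R]_(n, m))
  (mu0 muf : 'cV[R]_n) (Sig0 W : 'M[R]_n) (rho : R).
Hypothesis hWpsd : forall v : 'cV[R]_n, 0 <= (v^T *m W *m v) ord0 ord0.

Lemma inD_mix l (ub1 ub2 : 'cV[R]_(\sum_(t < T) m))
  (K1 K2 : 'M[R]_(\sum_(i < T) m, \sum_(j < T) n)) :
  inD T ub1 K1 -> inD T ub2 K2 ->
  inD T (l *: ub1 + (1 - l) *: ub2) (l *: K1 + (1 - l) *: K2).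
Proof.
move=> h1 h2 i j hij; rewrite submxblock_mix h1 // h2 //.
by rewrite !scaler0 addr0.
Qed.

Lemma J1_mix l (K1 K2 : 'M[R]_(\sum_(i < T) m, \sum_(j < T) n)) :
  0 <= l <= 1 ->
  J1conv T A B Sig0 W (l *: K1 + (1 - l) *: K2)
  <= l * J1conv T A B Sig0 W K1 + (1 - l) * J1conv T A B Sig0 W K2.
Proof.
move=> /andP[l0 l1].
set c0 := \tr (Phi A T 0 *m Sig0 *m (Phi A T 0)^T).
have e : forall K, J1conv T A B Sig0 W K
   = c0 + qf (Wbold T W) (PT R n T *m (Gw T A + Gu T A B *m K)).
  by move=> K; rewrite J1convE.
rewrite !e aff_mix qf_mix.
have hq := qf_Wbold (PT R n T *m (Gw T A + Gu T A B *m K1) - PT R n T *m (Gw T A + Gu T A B *m K2)) hWpsd.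
move: hq.
set q := qf _ (_ - _); set a := qf _ (PT R n T *m (Gw T A + Gu T A B *m K1));
set b := qf _ (PT R n T *m (Gw T A + Gu T A B *m K2)) => hq.
rewrite -subr_ge0.
have -> : l * (c0 + a) + (1 - l) * (c0 + b) - (c0 + (l * a + (1 - l) * b - l * (1 - l) * q))
  = l * (1 - l) * q by ring.
by rewrite !mulr_ge0 // subr_ge0.
Qed.

Lemma inD1_mix l (ub1 ub2 : 'cV[R]_(\sum_(t < T) m))
  (K1 K2 : 'M[R]_(\sum_(i < T) m, \sum_(j < T) n)) :
  0 <= l <= 1 ->
  inD1 T W rho ub1 K1 -> inD1 T W rho ub2 K2 ->
  inD1 T W rho (l *: ub1 + (1 - l) *: ub2) (l *: K1 + (1 - l) *: K2).
Proof.
move=> /andP[l0 l1] [hD1 g1] [hD2 g2]; split; first exact: inD_mix.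
have e : forall ub : 'cV[R]_(\sum_(t < T) m), (ub^T *m ub) ord0 ord0 = qf 1%:M ub^T.
  by move=> ub; rewrite /qf mulmx1 trmxK trace_mx11.
move: g1 g2; rewrite !e.
have et : (l *: ub1 + (1 - l) *: ub2)^T = l *: ub1^T + (1 - l) *: ub2^T.
  by rewrite raddfD /= !linearZ.
rewrite et.
rewrite -[\tr ((l *: K1 + (1 - l) *: K2) *m Wbold T W *m _)]/(qf (Wbold T W) (l *: K1 + (1 - l) *: K2)).
rewrite -[\tr (K1 *m Wbold T W *m _)]/(qf (Wbold T W) K1).
rewrite -[\tr (K2 *m Wbold T W *m _)]/(qf (Wbold T W) K2).
rewrite !qf_mix.
have hq1 := qf_ge0 (ub1^T - ub2^T) (@psd1 R _).
have hq2 := qf_Wbold (K1 - K2) hWpsd.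
move: hq1 hq2.
set q1 := qf 1%:M _; set q2 := qf (Wbold T W) (K1 - K2).
set a1 := qf 1%:M ub1^T; set a2 := qf 1%:M ub2^T.
set b1 := qf (Wbold T W) K1; set b2 := qf (Wbold T W) K2.
move=> hq1 hq2 g1 g2.
have hl1 : 0 <= 1 - l by rewrite subr_ge0.
have t1 : l * (a1 + b1 - rho ^+ 2) <= 0 := mulr_ge0_le0 l0 g1.
have t2 : (1 - l) * (a2 + b2 - rho ^+ 2) <= 0 := mulr_ge0_le0 hl1 g2.
have t3 : 0 <= l * (1 - l) * (q1 + q2) := mulr_ge0 (mulr_ge0 l0 hl1) (addr_ge0 hq1 hq2).
have -> : l * a1 + (1 - l) * a2 - l * (1 - l) * q1 + (l * b1 + (1 - l) * b2 - l * (1 - l) * q2) - rho ^+ 2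
  = l * (a1 + b1 - rho ^+ 2) + (1 - l) * (a2 + b2 - rho ^+ 2) - l * (1 - l) * (q1 + q2) by ring.
lra.
Qed.

Lemma inD2_mix l (ub1 ub2 : 'cV[R]_(\sum_(t < T) m))
  (K1 K2 : 'M[R]_(\sum_(i < T) m, \sum_(j < T) n)) :
  inD2 T A B mu0 muf ub1 K1 -> inD2 T A B mu0 muf ub2 K2 ->
  inD2 T A B mu0 muf (l *: ub1 + (1 - l) *: ub2) (l *: K1 + (1 - l) *: K2).
Proof.
move=> [hD1 e1] [hD2 e2]; split; first exact: inD_mix.
move: e1 e2.
rewrite ![Gu T A B *m _ + _]addrC aff_mix.
set a := PT R n T *m _; set b := PT R n T *m _ => e1 e2.
have -> : l *: a + (1 - l) *: b - muf = l *: (a - muf) + (1 - l) *: (b - muf).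
  rewrite !scalerBr addrACA -opprD -scalerDl.
  have -> : l + (1 - l) = 1 by ring.
  by rewrite scale1r.
by rewrite e1 e2 !scaler0 addr0.
Qed.
End Part4.

Unset Implicit Arguments.
Theorem theorem1
  (R : realType) (d : measure_display) (Om : measurableType d)
  (P : probability Om R) (n m T : nat)
  (A : nat -> 'M[R]_n) (B : nat -> 'M[R]_(n, m))
  (mu0 : 'cV[R]_n) (Sig0 W : 'M[R]_n)
  (x0 : Om -> 'cV[R]_n) (w : nat -> Om -> 'cV[R]_n)
  (rho : R) (muf : 'cV[R]_n)
  (* Sigma_0 symmetric positive definite *)
  (hSig0sym : Sig0^T = Sig0)
  (hSig0pd : forall v : 'cV[R]_n, v != 0 -> 0 < (v^T *m Sig0 *m v) ord0 ord0)
  (* W symmetric positive semidefinite *)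
  (hWsym : W^T = W)
  (hWpsd : forall v : 'cV[R]_n, 0 <= (v^T *m W *m v) ord0 ord0)
  (* x(0) ~ N(mu0, Sigma0) *)
  (hx0 : gaussian P x0 mu0 Sig0)
  (* w(0), ..., w(T-1) identically distributed N(0, W) *)
  (hw : forall t, (t < T)%N -> gaussian P (w t) 0 W)
  (* uncorrelated across time *)
  (hwunc : forall t s, (t < T)%N -> (s < T)%N -> t <> s ->
     Ecross P (w t) (w s) = 0)
  (* E[x0 w(t)^T] = 0 *)
  (hx0w : forall t, (t < T)%N -> Ecross P x0 (w t) = 0)
  (hrho : 0 < rho) :
  (* 1. every policy (Ubar, K) corresponds to (vcat Ubar, calK K) in scrD, with
        the same objective and the same feasibility *)
  (forall (Ubar : nat -> 'cV[R]_m) (Kf : nat -> nat -> 'M[R]_(m, n)),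
     [/\ inD T (vcat T Ubar) (calK T Kf),
         J1stoch P T A B x0 w Ubar Kf = J1conv T A B Sig0 W (calK T Kf),
         ((('E_P[fun om => (\sum_(t < T) ((u_proc Ubar Kf w t om)^T
                                          *m u_proc Ubar Kf w t om) ord0 ord0)%R]
             - (rho ^+ 2)%:E <= 0)%E)
          <-> inD1 T W rho (vcat T Ubar) (calK T Kf)) &
         (Emean P (x_proc A B x0 Ubar Kf w T) = muf
          <-> inD2 T A B mu0 muf (vcat T Ubar) (calK T Kf))]) /\
  (* 2. every element of scrD arises from some policy *)
  (forall (ub : 'cV[R]_(\sum_(t < T) m))
          (K : 'M[R]_(\sum_(i < T) m, \sum_(j < T) n)),
     inD T ub K -> exists Ubar Kf, ub = vcat T Ubar /\ K = calK T Kf) /\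
  (* 3. hence the optimal solutions correspond *)
  (forall (Ubar : nat -> 'cV[R]_m) (Kf : nat -> nat -> 'M[R]_(m, n)),
     orig_opt P T A B x0 w rho muf Ubar Kf
     <-> conv_opt T A B mu0 muf Sig0 W rho (vcat T Ubar) (calK T Kf)) /\
  (* 4. the program is convex: scrD, scrD_1, scrD_2 convex, calJ_1 convex on scrD *)
  (forall (l : R) (ub1 ub2 : 'cV[R]_(\sum_(t < T) m))
          (K1 K2 : 'M[R]_(\sum_(i < T) m, \sum_(j < T) n)),
     0 <= l <= 1 ->
     let ub := l *: ub1 + (1 - l) *: ub2 in
     let K := l *: K1 + (1 - l) *: K2 in
     [/\ inD T ub1 K1 -> inD T ub2 K2 -> inD T ub K,
         inD T ub1 K1 -> inD T ub2 K2 ->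
           J1conv T A B Sig0 W K
             <= l * J1conv T A B Sig0 W K1 + (1 - l) * J1conv T A B Sig0 W K2,
         inD1 T W rho ub1 K1 -> inD1 T W rho ub2 K2 -> inD1 T W rho ub K &
         inD2 T A B mu0 muf ub1 K1 -> inD2 T A B mu0 muf ub2 K2 ->
           inD2 T A B mu0 muf ub K]).
Proof.
have P1u := fun (Ubar : nat -> 'cV[R]_m) (Kf : nat -> nat -> 'M[R]_(m, n)) => part1_u rho hw hwunc Ubar Kf.
have P1m := fun (Ubar : nat -> 'cV[R]_m) (Kf : nat -> nat -> 'M[R]_(m, n)) => part1_mean A B muf hx0 hw hwunc hx0w Ubar Kf.
have P1J := fun (Ubar : nat -> 'cV[R]_m) (Kf : nat -> nat -> 'M[R]_(m, n)) => part1_J A B hx0 hw hwunc hx0w Ubar Kf.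
split.
  move=> Ubar Kf; split; [exact: inD_calK | exact: P1J | exact: P1u | exact: P1m].
split; first by move=> ub K; exact: part2.
split.
  move=> Ubar Kf; split.
    case=> [[hu hm] hopt].
    split; first exact: inD_calK.
    split; first exact: (proj1 (P1u Ubar Kf)) hu.
    split; first exact: (proj1 (P1m Ubar Kf)) hm.
    move=> ub' K' hD hD1 hD2.
    have [U' [K'' [e1 e2]]] := part2 hD.
    subst ub' K'.
    rewrite -(P1J Ubar Kf) -(P1J U' K''); apply: hopt; split.
      exact: (proj2 (P1u U' K'')) hD1.
    exact: (proj2 (P1m U' K'')) hD2.
  case=> [_ [h1 [h2 hopt]]].
  split; first by split; [exact: (proj2 (P1u Ubar Kf)) h1 | exact: (proj2 (P1m Ubar Kf)) h2].
  move=> U' K' [hu' hm']; rewrite !P1J; apply: hopt.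
  - exact: inD_calK.
  - exact: (proj1 (P1u U' K')) hu'.
  - exact: (proj1 (P1m U' K')) hm'.
move=> l ub1 ub2 K1 K2 hl /=; split.
- exact: inD_mix.
- by move=> _ _; exact: J1_mix.
- exact: inD1_mix.
- exact: inD2_mix.
Qed.
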